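(* Let $m$ be a positive integer and let $\mathcal D$ be a distribution on $G_m\times\{0,1\}$, where $G_m=\{0,1/m,\ldots,1\}$. Then $\mathsf{CDL}(\mathcal D)\le2\,\mathsf{SCDL}_m(\mathcal D)+2/m$.
   Context: For $x\in\mathbb R$ write $x_+=\max\{x,0\}$. For a distribution $\mathcal D$ of $(p,y)\in[0,1]\times\{0,1\}$ and $i\in\{0,\ldots,m\}$, let $w_i(p)=(1-|mp-i|)_+$, $\pi_i=\mathbb E_{\mathcal D}[w_i(p)]$ and $q_i=\mathbb E_{\mathcal D}[w_i(p)y]/\pi_i$ (terms with $\pi_i=0$ are $0$; when $p\in G_m$ these are $\Pr[p=i/m]$ and $\mathbb E[y\mid p=i/m]$). Define $$\mathsf{SCDL}_m(\mathcal D)=\max_{i=0,\ldots,m}\Big(\sum_{j=0}^{i}\pi_j\big(q_j-\tfrac{i+1}{m}\big)_+ +\sum_{j=i+1}^{m}\pi_j\big(\tfrac im-q_j\big)_+\Big).$$ A decision task $Z=(A,U)$ has action set $A$ and utility $U:A\times\{0,1\}\to[0,1]$; its best-response function is $r_Z^*(p)\in\arg\max_{a\in A}\mathbb E_{y\sim\mathsf{Ber}(p)}U(a,y)$; the swap regret of a response $r$ is $\mathsf{SR}_Z(r,\mathcal D)=\sup_{\sigma:A\to A}\mathbb E_{(p,y)\sim\mathcal D}[U(\sigma(r(p)),y)-U(r(p),y)]$. The calibration decision loss is $\mathsf{CDL}(\mathcal D)=\sup_Z\mathsf{SR}_Z(r_Z^*,\mathcal D)$ over all such decision tasks. *)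

(* Defs.v *)
From mathcomp Require Import all_boot all_order all_algebra.
Set Implicit Arguments. Unset Strict Implicit. Unset Printing Implicit Defensive.
Import Order.TTheory GRing.Theory Num.Theory.
Local Open Scope ring_scope.

Definition pospart (R : realFieldType) (x : R) : R := Num.max x 0.

(* A distribution on G_m x {0,1}: the point (k/m, y) has mass D k y,
   for k : 'I_m.+1 and y : bool. *)
Definition is_distr (R : realFieldType) (m : nat) (D : 'I_m.+1 -> bool -> R) :=
  (forall k y, 0 <= D k y) /\ \sum_(k < m.+1) \sum_(y : bool) D k y = 1.

Definition gridpt (R : realFieldType) (m : nat) (k : 'I_m.+1) : R := k%:R / m%:R.

Definition wt (R : realFieldType) (m i : nat) (p : R) : R :=
  pospart (1 - `|m%:R * p - i%:R|).

Definition piw (R : realFieldType) (m : nat) (D : 'I_m.+1 -> bool -> R) (i : nat) : R :=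
  \sum_(k < m.+1) \sum_(y : bool) D k y * wt m i (gridpt R k).

Definition qw (R : realFieldType) (m : nat) (D : 'I_m.+1 -> bool -> R) (i : nat) : R :=
  if piw D i == 0 then 0 else
  (\sum_(k < m.+1) \sum_(y : bool) D k y * wt m i (gridpt R k) * (y : nat)%:R) / piw D i.

Definition SCDL (R : realFieldType) (m : nat) (D : 'I_m.+1 -> bool -> R) : R :=
  \big[Num.max/0]_(i < m.+1)
    (\sum_(j < m.+1 | (j <= i)%N) piw D j * pospart (qw D j - (i.+1)%:R / m%:R)
   + \sum_(j < m.+1 | (i < j)%N) piw D j * pospart ((i : nat)%:R / m%:R - qw D j)).

Definition exp_util (R : realFieldType) (A : Type) (U : A -> bool -> R) (p : R) (a : A) : R :=
  p * U a true + (1 - p) * U a false.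

Definition is_best_response (R : realFieldType) (A : Type) (U : A -> bool -> R)
  (r : R -> A) : Prop :=
  forall p : R, 0 <= p <= 1 -> forall a : A, exp_util U p a <= exp_util U p (r p).

Definition swap_gain (R : realFieldType) (m : nat) (D : 'I_m.+1 -> bool -> R)
  (A : Type) (U : A -> bool -> R) (r : R -> A) (sigma : A -> A) : R :=
  \sum_(k < m.+1) \sum_(y : bool)
     D k y * (U (sigma (r (gridpt R k))) y - U (r (gridpt R k)) y).

(* Main.v *)
Require Import Defs.
From mathcomp Require Import all_boot all_order all_algebra.
From mathcomp Require Import ring lra zify.
Set Implicit Arguments. Unset Strict Implicit. Unset Printing Implicit Defensive.
Import Order.TTheory GRing.Theory Num.Theory.
Local Open Scope ring_scope.

Definition gp (R : realFieldType) (m j : nat) : R := j%:R / m%:R.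
Definition sl (R : realFieldType) (A : Type) (U : A -> bool -> R) (c : A) : R :=
  U c true - U c false.
Definition Vv (R : realFieldType) (A : Type) (U : A -> bool -> R) (r : R -> A) (m j : nat) : R :=
  exp_util U (gp R m j) (r (gp R m j)).
Definition Dl (R : realFieldType) (A : Type) (U : A -> bool -> R) (r : R -> A) (m j : nat) : R :=
  if j == 0%N then -1 else if (j <= m)%N then m%:R * (Vv U r m j - Vv U r m j.-1) else 1.

Lemma EU_lin (R : realFieldType) (A : Type) (U : A -> bool -> R) p c :
  exp_util U p c = U c false + p * sl U c.
Proof. rewrite /exp_util /sl; ring. Qed.

Lemma gpS (R : realFieldType) m j : gp R m j.+1 = gp R m j + 1 / m%:R.
Proof. by rewrite /gp -mulrDl -natr1. Qed.

Lemma gp_ge0 (R : realFieldType) m j : 0 <= gp R m j.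
Proof. by rewrite /gp divr_ge0 ?ler0n. Qed.

Lemma gp_le1 (R : realFieldType) m j : (0 < m)%N -> (j <= m)%N -> gp R m j <= 1.
Proof. by move=> hm hj; rewrite /gp ler_pdivrMr ?ltr0n // mul1r ler_nat. Qed.

Lemma gp_lt (R : realFieldType) m i j : (0 < m)%N -> (gp R m i < gp R m j) = (i < j)%N.
Proof. by move=> hm; rewrite /gp ltr_pM2r ?invr_gt0 ?ltr0n // ltr_nat. Qed.

Lemma gp_le (R : realFieldType) m i j : (0 < m)%N -> (gp R m i <= gp R m j) = (i <= j)%N.
Proof. by move=> hm; rewrite /gp ler_pM2r ?invr_gt0 ?ltr0n // ler_nat. Qed.

Lemma best (R : realFieldType) (m : nat) (hm : (0 < m)%N) (A : Type) (U : A -> bool -> R)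
  (r : R -> A) (hr : is_best_response U r) j c :
  (j <= m)%N -> exp_util U (gp R m j) c <= Vv U r m j.
Proof.
move=> hj; apply: hr; rewrite gp_ge0 gp_le1 //.
Qed.

Lemma Dl_e (R : realFieldType) (m : nat) (hm : (0 < m)%N) (A : Type) (U : A -> bool -> R)
  (r : R -> A) j : (0 < j <= m)%N -> Dl U r m j * (1 / m%:R) = Vv U r m j - Vv U r m j.-1.
Proof.
case/andP=> h0 hj; rewrite /Dl hj; case: eqP => [e|_]; first by rewrite e in h0.
field; by rewrite pnatr_eq0 -lt0n.
Qed.

Lemma slope_bounds (R : realFieldType) (m : nat) (hm : (0 < m)%N) (A : Type) (U : A -> bool -> R)
  (hU : forall a y, 0 <= U a y <= 1)
  (r : R -> A) (hr : is_best_response U r) j :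
  (j <= m)%N -> Dl U r m j <= sl U (r (gp R m j)) <= Dl U r m j.+1.
Proof.
move=> hj; have hm0 : (m%:R : R) != 0 by rewrite pnatr_eq0 -lt0n.
have hM : (0 : R) <= m%:R by rewrite ler0n.
apply/andP; split.
  case: j hj => [|j] hj.
    rewrite /Dl /= /sl; move: (hU (r (gp R m 0)) true) (hU (r (gp R m 0)) false); lra.
  rewrite /Dl /= hj.
  have h1 := best hm hr (r (gp R m j.+1)) (ltnW hj).
  have : Vv U r m j.+1 - Vv U r m j <= sl U (r (gp R m j.+1)) * (1 / m%:R).
    move: h1; rewrite /Vv !EU_lin gpS; lra.
  move=> h2; have := ler_wpM2l hM h2.
  have -> : m%:R * (sl U (r (gp R m j.+1)) * (1 / m%:R)) = sl U (r (gp R m j.+1)) by field.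
  done.
rewrite /Dl /=; case: ltnP => hj'.
  have h1 := best hm hr (r (gp R m j)) hj'.
  have : sl U (r (gp R m j)) * (1 / m%:R) <= Vv U r m j.+1 - Vv U r m j.
    move: h1; rewrite /Vv !EU_lin gpS; lra.
  move=> h2; have := ler_wpM2l hM h2.
  have -> : m%:R * (sl U (r (gp R m j)) * (1 / m%:R)) = sl U (r (gp R m j)) by field.
  done.
rewrite /sl; move: (hU (r (gp R m j)) true) (hU (r (gp R m j)) false); lra.
Qed.
Lemma posE (R : realFieldType) (x : R) : pospart x = if x < 0 then 0 else x.
Proof. by []. Qed.

Lemma pos_ge0 (R : realFieldType) (x : R) : 0 <= pospart x.
Proof. rewrite posE; case: ltP => ? //; lra. Qed.

Lemma pos_ge (R : realFieldType) (x : R) : x <= pospart x.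
Proof. rewrite posE; case: ltP => ? //; lra. Qed.

Lemma pos0 (R : realFieldType) (x : R) : x <= 0 -> pospart x = 0.
Proof. rewrite posE; case: ltP => ? //; lra. Qed.

Lemma pos_shift (R : realFieldType) (x c : R) : 0 <= c -> pospart (x + c) <= pospart x + c.
Proof. rewrite !posE; case: ltP => ?; case: ltP => ?; lra. Qed.

Lemma pos_le (R : realFieldType) (x y : R) : x <= y -> pospart x <= pospart y.
Proof. rewrite !posE; case: ltP => ?; case: ltP => ?; lra. Qed.

Lemma bigmax_ge (R : realFieldType) (I : eqType) (s : seq I) (F : I -> R) i :
  i \in s -> F i <= \big[Num.max/0]_(j <- s) F j.
Proof.
elim: s => // a s IH; rewrite in_cons big_cons => /orP [/eqP ->|/IH h].
  by rewrite le_max lexx.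
by rewrite le_max h orbT.
Qed.

Lemma bigmax_ge0 (R : realFieldType) (I : Type) (s : seq I) (F : I -> R) :
  0 <= \big[Num.max/0]_(j <- s) F j.
Proof. by elim: s => [|a s IH]; rewrite ?big_nil ?big_cons // le_max IH orbT. Qed.

Lemma ident (R : realFieldType) (m : nat) (hm : (0 < m)%N) (A : Type) (U : A -> bool -> R)
  (r : R -> A) k n (x : R) : (k + n <= m)%N ->
  \sum_(k <= j < (k + n).+1) (Dl U r m j.+1 - Dl U r m j) * (x - gp R m j)
  = Dl U r m (k + n).+1 * (x - gp R m (k + n)) - Dl U r m k * (x - gp R m k)
    + Vv U r m (k + n) - Vv U r m k.
Proof.
elim: n => [|n IH] h.
  rewrite addn0 big_nat1; ring.
rewrite big_nat_recr /= ?leqW ?leq_addr // addnS IH; last by apply: ltnW; rewrite -addnS.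
have e : Dl U r m (k + n).+1 * (1 / m%:R) = Vv U r m (k + n).+1 - Vv U r m (k + n).
  by rewrite (Dl_e hm) //; apply/andP; split; [done|rewrite -addnS h].
have -> : Vv U r m (k + n).+1 = Vv U r m (k + n) + Dl U r m (k + n).+1 * (1 / m%:R).
  by rewrite e; ring.
rewrite gpS; ring.
Qed.

Lemma interp (R : realFieldType) (m : nat) (hm : (0 < m)%N) (A : Type) (U : A -> bool -> R)
  (r : R -> A) (hr : is_best_response U r) l q c :
  (l <= m)%N -> gp R m l <= q -> q <= gp R m l.+1 -> q <= 1 ->
  exp_util U q c <= Vv U r m l + Dl U r m l.+1 * (q - gp R m l).
Proof.
move=> hl h1 h2 h3; have hm0 : (m%:R : R) != 0 by rewrite pnatr_eq0 -lt0n.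
case: (ltnP l m) => hlm; last first.
  have el : l = m by apply/eqP; rewrite eqn_leq hl hlm.
  subst l; have g1 : gp R m m = 1 by rewrite /gp mulfV.
  have -> : q = gp R m m by apply/eqP; rewrite eq_le h1 g1 h3.
  by rewrite subrr mulr0 addr0 (best hm hr).
have [t [ht0 ht1 hq]] : exists t : R, [/\ 0 <= t, t <= 1 & q = gp R m l + t * (1 / m%:R)].
  exists (m%:R * (q - gp R m l)); split.
  - by rewrite mulr_ge0 ?ler0n // subr_ge0.
  - have : q - gp R m l <= 1 / m%:R by move: h2; rewrite gpS; lra.
    move/(ler_wpM2l (ler0n R m)).
    have -> : (m%:R : R) * (1 / m%:R) = 1 by field.
    done.
  - by field.
rewrite hq.
have e : Dl U r m l.+1 * (1 / m%:R) = Vv U r m l.+1 - Vv U r m l by rewrite (Dl_e hm) ?hlm.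
have -> : Dl U r m l.+1 * (gp R m l + t * (1 / m%:R) - gp R m l) = t * (Vv U r m l.+1 - Vv U r m l).
  by rewrite -e; ring.
have b0 := best hm hr c (ltnW hlm).
have b1 := best hm hr c hlm.
move: b0 b1; rewrite !EU_lin gpS => b0 b1.
have p0 : 0 <= (1 - t) * (Vv U r m l - (U c false + gp R m l * sl U c)) by rewrite mulr_ge0 //; lra.
have p1 : 0 <= t * (Vv U r m l.+1 - (U c false + (gp R m l + 1 / m%:R) * sl U c)) by rewrite mulr_ge0 //; lra.
lra.
Qed.

Lemma find_l (R : realFieldType) (m : nat) (hm : (0 < m)%N) (q : R) :
  0 <= q -> q <= 1 -> exists l, [/\ (l <= m)%N, gp R m l <= q & q < gp R m l.+1].
Proof.
move=> h0 h1.
have H : forall n, (exists l, [/\ (l < n)%N, gp R m l <= q & q < gp R m l.+1]) \/ gp R m n <= q.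
  elim=> [|n [[l [a b c]]|IH]]; first by right; rewrite /gp mul0r.
  - by left; exists l; split => //; apply: ltnW.
  - case: (ltrP q (gp R m n.+1)) => h; last by right.
    by left; exists n; split.
case: (H m.+1) => [[l [a b c]]|h]; first by exists l; split.
have : gp R m m.+1 <= gp R m m by rewrite (le_trans h) // (le_trans h1) // /gp mulfV // pnatr_eq0 -lt0n.
by rewrite gp_le // ltnn.
Qed.

Lemma mu_ge0 (R : realFieldType) (m : nat) (hm : (0 < m)%N) (A : Type) (U : A -> bool -> R)
  (hU : forall a y, 0 <= U a y <= 1)
  (r : R -> A) (hr : is_best_response U r) j : 0 <= Dl U r m j.+1 - Dl U r m j.
Proof.
rewrite subr_ge0; case: (leqP j m) => hj.
  by case/andP: (slope_bounds hm hU hr hj) => a b; apply: le_trans b.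
rewrite /Dl /= leqNgt hj ltnNge ltnW //=.
by case: eqP => // e; rewrite e in hj.
Qed.

Definition psi (R : realFieldType) (m j k : nat) (q : R) : R :=
  (if (k <= j)%N then pospart (q - gp R m j) else 0) +
  (if (j <= k)%N then pospart (gp R m j - q) else 0).

Lemma psi_ge0 (R : realFieldType) m j k (q : R) : 0 <= psi m j k q.
Proof. by rewrite /psi; case: ifP; case: ifP => _ _; rewrite ?addr0 ?add0r ?addr_ge0 ?pos_ge0. Qed.

Lemma sum_split3 (R : realFieldType) (F : nat -> R) a b n :
  (forall j, 0 <= F j) -> (a <= b)%N -> (b <= n)%N ->
  \sum_(a <= j < b) F j <= \sum_(0 <= j < n) F j.
Proof.
move=> hF hab hbn; rewrite (@big_cat_nat _ _ _ a 0 n) /= ?(leq_trans hab hbn) //.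
rewrite (@big_cat_nat _ _ _ b a n) /= // addrCA lerDl addr_ge0 //; apply: sumr_ge0 => *; exact: hF.
Qed.

Lemma kbound (R : realFieldType) (m : nat) (hm : (0 < m)%N) (A : Type) (U : A -> bool -> R)
  (hU : forall a y, 0 <= U a y <= 1)
  (r : R -> A) (hr : is_best_response U r) k q c :
  (k <= m)%N -> 0 <= q -> q <= 1 ->
  exp_util U q c - exp_util U q (r (gp R m k)) <=
  \sum_(0 <= j < m.+1) (Dl U r m j.+1 - Dl U r m j) * psi m j k q.
Proof.
move=> hk h0 h1.
have hF : forall j, 0 <= (Dl U r m j.+1 - Dl U r m j) * psi m j k q.
  by move=> j; rewrite mulr_ge0 ?psi_ge0 ?(mu_ge0 hm hU hr).
have [l [hl hl1 hl2]] := find_l hm h0 h1.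
have hI := interp hm hr c hl hl1 (ltW hl2) h1.
have hak : exp_util U q (r (gp R m k)) = Vv U r m k + sl U (r (gp R m k)) * (q - gp R m k).
  rewrite /Vv !EU_lin; ring.
have /andP [sb1 sb2] := slope_bounds hm hU hr hk.
case: (lerP (gp R m k) q) => hkq.
  have kl : (k <= l)%N by rewrite -ltnS -(gp_lt R _ _ hm) (le_lt_trans hkq).
  have p : 0 <= (sl U (r (gp R m k)) - Dl U r m k) * (q - gp R m k).
    by rewrite mulr_ge0 // subr_ge0.
  have := ident hm U r (k := k) (n := l - k) q; rewrite subnKC // => /(_ hl) e.
  apply: le_trans (@sum_split3 _ _ k l.+1 m.+1 hF (leqW kl) _); last by [].
  apply: le_trans (_ : \sum_(k <= j < l.+1) (Dl U r m j.+1 - Dl U r m j) * (q - gp R m j) <= _).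
    rewrite e; lra.
  rewrite big_nat_cond [X in _ <= X]big_nat_cond; apply: ler_sum => j /andP [/andP [kj _] _].
  apply: (ler_wpM2l (mu_ge0 hm hU hr j)).
  rewrite /psi kj; apply: le_trans (pos_ge _) _; rewrite lerDl; case: ifP => _ //; exact: pos_ge0.
have lk : (l < k)%N by rewrite -(gp_lt R _ _ hm) (le_lt_trans hl1).
have p : 0 <= (Dl U r m k.+1 - sl U (r (gp R m k))) * (gp R m k - q).
  by apply: mulr_ge0; rewrite subr_ge0 //; apply: ltW.
have := ident hm U r (k := l.+1) (n := k - l.+1) q; rewrite subnKC // => /(_ hk) e.
have e2 : Dl U r m l.+1 * (1 / m%:R) = Vv U r m l.+1 - Vv U r m l.
  by rewrite (Dl_e hm) // (leq_trans lk hk).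
have hI2 : exp_util U q c <= Vv U r m l.+1 + Dl U r m l.+1 * (q - gp R m l.+1).
  move: hI; rewrite gpS; have : Dl U r m l.+1 * (q - (gp R m l + 1 / m%:R)) =
    Dl U r m l.+1 * (q - gp R m l) - Dl U r m l.+1 * (1 / m%:R) by ring.
  lra.
apply: le_trans (@sum_split3 _ _ l.+1 k.+1 m.+1 hF (leqW lk) _); last by [].
have e3 : \sum_(l.+1 <= j < k.+1) (Dl U r m j.+1 - Dl U r m j) * (gp R m j - q) =
   - \sum_(l.+1 <= j < k.+1) (Dl U r m j.+1 - Dl U r m j) * (q - gp R m j).
  by rewrite -sumrN; apply: eq_bigr => j _; ring.
apply: le_trans (_ : \sum_(l.+1 <= j < k.+1) (Dl U r m j.+1 - Dl U r m j) * (gp R m j - q) <= _).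
  rewrite e3 e; lra.
rewrite big_nat_cond [X in _ <= X]big_nat_cond; apply: ler_sum => j /andP [/andP [_ jk] _].
apply: (ler_wpM2l (mu_ge0 hm hU hr j)).
rewrite /psi; rewrite ltnS in jk; rewrite jk; apply: le_trans (pos_ge _) _; rewrite lerDr; case: ifP => _ //; exact: pos_ge0.
Qed.

Lemma wt_grid (R : realFieldType) (m : nat) (hm : (0 < m)%N) (i k : nat) :
  wt m i (gp R m k) = if k == i then 1 else 0.
Proof.
rewrite /wt /gp mulrCA mulfV ?pnatr_eq0 -?lt0n // mulr1.
case: eqP => [->|ne].
  by rewrite subrr normr0 subr0 posE ltNge ler01.
apply: pos0; rewrite subr_le0.
have : (k < i)%N \/ (i < k)%N by case: (ltngtP k i) => e; [left|right|exfalso; apply: ne].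
case=> h.
- have h' := ltnW h.
  rewrite distrC ger0_norm; last by rewrite subr_ge0 ler_nat.
  by rewrite -natrB // ler1n subn_gt0.
- have h' := ltnW h.
  rewrite ger0_norm; last by rewrite subr_ge0 ler_nat.
  by rewrite -natrB // ler1n subn_gt0.
Qed.

Lemma piwE (R : realFieldType) (m : nat) (hm : (0 < m)%N) (D : 'I_m.+1 -> bool -> R) (i : 'I_m.+1) :
  piw D i = D i true + D i false.
Proof.
rewrite /piw (bigD1 i) //= [X in _ + X]big1 ?addr0.
  by rewrite big_bool /= /gridpt -/(gp R m i) wt_grid // eqxx !mulr1.
move=> k /negPf hk; rewrite big_bool /= /gridpt -/(gp R m k) wt_grid //.
by rewrite (_ : (k == i :> nat) = false) ?mulr0 ?addr0 // -hk.
Qed.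

Lemma qwE (R : realFieldType) (m : nat) (hm : (0 < m)%N) (D : 'I_m.+1 -> bool -> R) (i : 'I_m.+1) :
  qw D i = if piw D i == 0 then 0 else D i true / piw D i.
Proof.
rewrite /qw; case: eqP => // _; congr (_ / _).
rewrite (bigD1 i) //= [X in _ + X]big1 ?addr0.
  by rewrite big_bool /= /gridpt -/(gp R m i) wt_grid // eqxx !mulr1 mulr0 addr0.
move=> k /negPf hk; rewrite big_bool /= /gridpt -/(gp R m k) wt_grid //.
by rewrite (_ : (k == i :> nat) = false) ?mulr0 ?mul0r ?addr0 //; exact: hk.
Qed.

Lemma piw_ge0 (R : realFieldType) (m : nat) (hm : (0 < m)%N) (D : 'I_m.+1 -> bool -> R)
  (hD : is_distr D) (k : 'I_m.+1) : 0 <= piw D k.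
Proof. by case: hD => h _; rewrite piwE // addr_ge0. Qed.

Lemma piw_sum (R : realFieldType) (m : nat) (hm : (0 < m)%N) (D : 'I_m.+1 -> bool -> R)
  (hD : is_distr D) : \sum_(k < m.+1) piw D k = 1.
Proof.
case: hD => _ <-; apply: eq_bigr => k _; by rewrite piwE // big_bool.
Qed.

Lemma qw_01 (R : realFieldType) (m : nat) (hm : (0 < m)%N) (D : 'I_m.+1 -> bool -> R)
  (hD : is_distr D) (k : 'I_m.+1) : 0 <= qw D k <= 1.
Proof.
have [h _] := hD; rewrite qwE //; case: eqP => [_|]; first by rewrite lexx ler01.
rewrite piwE // => ne.
have h1 := h k true; have h0 := h k false.
have hp : 0 < D k true + D k false by rewrite lt_def; apply/andP; split; [apply/eqP|]; rewrite ?addr_ge0.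
rewrite divr_ge0 ?addr_ge0 //= ler_pdivrMr // mul1r; lra.
Qed.

Lemma gainE (R : realFieldType) (m : nat) (hm : (0 < m)%N) (D : 'I_m.+1 -> bool -> R)
  (hD : is_distr D) (A : Type) (U : A -> bool -> R) (k : 'I_m.+1) (a b : A) :
  \sum_(y : bool) D k y * (U b y - U a y) =
  piw D k * (exp_util U (qw D k) b - exp_util U (qw D k) a).
Proof.
have [h _] := hD; rewrite big_bool /= qwE //; case: eqP => [e|ne].
  have h1 := h k true; have h0 := h k false.
  move: e; rewrite piwE // => e.
  have e1 : D k true = 0 by apply/eqP; rewrite eq_le h1 andbT; lra.
  have e0 : D k false = 0 by apply/eqP; rewrite eq_le h0 andbT; lra.
  by rewrite e1 e0; ring.
move: ne; rewrite piwE // => ne; rewrite /exp_util.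
have ne' : D k true + D k false != 0 by apply/eqP.
by field.
Qed.

Lemma Bgen (R : realFieldType) (m : nat) (hm : (0 < m)%N) (D : 'I_m.+1 -> bool -> R)
  (hD : is_distr D) (G : 'I_m.+1 -> R) (i : 'I_m.+1) :
  (forall k : 'I_m.+1, G k <=
     (if (k <= i)%N then piw D k * pospart (qw D k - gp R m i.+1) else 0)
   + (if (i < k)%N then piw D k * pospart (gp R m i - qw D k) else 0)
   + piw D k * (1 / m%:R)) ->
  \sum_(k < m.+1) G k <= SCDL D + 1 / m%:R.
Proof.
move=> hG; apply: le_trans (ler_sum _ (fun k _ => hG k)) _.
rewrite !big_split /= -mulr_suml piw_sum // mul1r lerD2r.
rewrite -!big_mkcond /=.
rewrite /SCDL; apply: (bigmax_ge _ (mem_index_enum i)).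
Qed.

Lemma Bbound (R : realFieldType) (m : nat) (hm : (0 < m)%N) (D : 'I_m.+1 -> bool -> R)
  (hD : is_distr D) (j : 'I_m.+1) :
  \sum_(k < m.+1) piw D k * psi m j k (qw D k) <= SCDL D + 1 / m%:R.
Proof.
have hm0 : (0 : R) <= 1 / m%:R by rewrite divr_ge0 ?ler0n.
case: (lerP (gp R m j) (qw D j)) => hq.
  apply: (Bgen hm hD (G := fun k => piw D k * psi m j k (qw D k)) (i := j)) => k; have hp := piw_ge0 hm hD k.
  case: (leqP k j) => hkj.
    rewrite addr0 -mulrDr; apply: ler_wpM2l => //.
    rewrite /psi hkj; case: (leqP j k) => hjk.
      have ekj : k = j by apply/val_inj/eqP; rewrite eqn_leq hkj hjk.
      rewrite ekj (pos0 (x := gp R m j - qw D j)) ?addr0; last by lra.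
      rewrite gpS; apply: le_trans (pos_shift _ hm0); apply: pos_le; lra.
    rewrite addr0 gpS; apply: le_trans (pos_shift _ hm0); apply: pos_le; lra.
  rewrite add0r -mulrDr; apply: ler_wpM2l => //.
  rewrite /psi leqNgt hkj ltnW //= add0r lerDl //.
case: (posnP j) => hj0.
  case/andP: (qw_01 hm hD j) => q0 _; move: hq q0; rewrite hj0 /gp mul0r => hq q0; exfalso; lra.
have hi : (j.-1 < m.+1)%N by rewrite (leq_ltn_trans (leq_pred j)).
have jS : j.-1.+1 = j by rewrite prednK.
apply: (Bgen hm hD (G := fun k => piw D k * psi m j k (qw D k)) (i := Ordinal hi)) => k /=; have hp := piw_ge0 hm hD k.
case: (leqP k j.-1) => hkj.
  rewrite addr0 -mulrDr; apply: ler_wpM2l => //.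
  have hkj' : (k < j)%N by rewrite -jS ltnS.
  rewrite /psi jS ltnW //= leqNgt hkj' /= addr0 lerDl //.
rewrite add0r -mulrDr; apply: ler_wpM2l => //.
have hjk : (j <= k)%N by rewrite -jS.
rewrite /psi hjk; case: (leqP k j) => hkj2.
  have ekj : k = j by apply/val_inj/eqP; rewrite eqn_leq hkj2 hjk.
  rewrite ekj (pos0 (x := qw D j - gp R m j)) ?add0r; last by lra.
  rewrite -{1}jS gpS; apply: le_trans (pos_shift _ hm0); apply: pos_le; lra.
rewrite add0r -{1}jS gpS; apply: le_trans (pos_shift _ hm0); apply: pos_le; lra.
Qed.

Unset Implicit Arguments. Set Strict Implicit.

Theorem lemma4p7 (R : realFieldType) (m : nat) (hm : (0 < m)%N)
  (D : 'I_m.+1 -> bool -> R) (hD : is_distr D)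
  (A : Type) (U : A -> bool -> R)
  (hU : forall a y, 0 <= U a y <= 1)
  (r : R -> A) (hr : is_best_response U r) (sigma : A -> A) :
  swap_gain D U r sigma <= 2 * SCDL D + 2 / m%:R.
Proof.
set mu := fun j => Dl U r m j.+1 - Dl U r m j.
have hmu : forall j, 0 <= mu j by move=> j; exact: (mu_ge0 hm hU hr).
rewrite /swap_gain.
under eq_bigr => k _ do rewrite gainE //.
apply: le_trans (_ : \sum_(k < m.+1) piw D k *
   \sum_(j < m.+1) mu j * psi m j k (qw D k) <= _).
  apply: ler_sum => k _; apply: ler_wpM2l; first exact: piw_ge0.
  rewrite /gridpt -/(gp R m k) -(big_mkord xpredT (fun j => mu j * psi m j k (qw D k))).
  case/andP: (qw_01 hm hD k) => q0 q1.
  exact: (kbound hm hU hr _ (ltn_ord k) q0 q1).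
under eq_bigr => k _ do rewrite mulr_sumr.
rewrite exchange_big /=.
apply: le_trans (_ : \sum_(j < m.+1) mu j * (SCDL D + 1 / m%:R) <= _).
  apply: ler_sum => j _.
  rewrite (_ : \sum_(i < m.+1) piw D i * (mu j * psi m j i (qw D i)) =
     mu j * \sum_(i < m.+1) piw D i * psi m j i (qw D i)).
    by apply: ler_wpM2l => //; exact: Bbound.
  by rewrite mulr_sumr; apply: eq_bigr => i _; ring.
rewrite -mulr_suml.
have -> : \sum_(j < m.+1) mu j = 2.
  rewrite -(big_mkord xpredT mu) telescope_sumr // /Dl /= ltnn /=.
  by rewrite opprK.
have : (0 : R) <= SCDL D by apply: bigmax_ge0.
rewrite mulrDr (_ : 2 * (1 / m%:R) = 2 / m%:R :> R) //; by rewrite mul1r.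
Qed.
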